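(* Let $\Delta:\mathbb N\to\mathbb N$ be a function, and let $\eta\in(0,1)$ and $C$ be constants such that for every $n\in\mathbb N$ there exist $\ell,m\in\mathbb N$ with $\ell+m\le\eta n+C$ and $\Delta(n)\le\Delta(\ell)+\Delta(m)$. Set $\alpha=\log(2)/\log(2/\eta)$. Then $\Delta(n)\preceq n^\alpha$.
   Context: For functions $f,g:\mathbb N\to\mathbb R_+$, write $g\preceq f$ if there is $C'>0$ with $g(n)\le f(C'n)$ for all sufficiently large $n$. *)

(* Defs.v *)
From Stdlib Require Import Reals.
Open Scope R_scope.

Definition preceq (g : nat -> R) (f : R -> R) : Prop :=
  exists Cp : R, 0 < Cp /\ exists N : nat, forall n : nat, (N <= n)%nat ->
    g n <= f (Cp * INR n).

(* Main.v *)
Require Import Defs.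
From Stdlib Require Import Reals.
From Stdlib Require Import Lra Lia Psatz ZArith.
Open Scope R_scope.

Lemma exp_le' x y : x <= y -> exp x <= exp y.
Proof.
  intros H; destruct (Rle_lt_or_eq_dec _ _ H) as [H1|H1].
  - left; apply exp_increasing; auto.
  - subst; lra.
Qed.

Lemma Rpower_pos x a : 0 < Rpower x a.
Proof. unfold Rpower; apply exp_pos. Qed.

Lemma bern a u : 0 <= a <= 1 -> 0 < u -> Rpower u a <= 1 + a * (u - 1).
Proof.
  intros Ha Hu. unfold Rpower. set (s := ln u). set (w := exp (a * s)).
  assert (Ht : forall z, w * (1 + (z - a * s)) <= exp z).
  { intro z. replace (exp z) with (w * exp (z - a * s)).
    - apply Rmult_le_compat_l; [unfold w; left; apply exp_pos|apply exp_ineq1_le].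
    - unfold w; rewrite <- exp_plus; f_equal; ring. }
  pose proof (Ht 0) as H0. rewrite exp_0 in H0.
  pose proof (Ht s) as H1. assert (Es : exp s = u) by (unfold s; apply exp_ln; auto). rewrite Es in H1.
  assert (E : w = (1 - a) * (w * (1 + (0 - a * s))) + a * (w * (1 + (s - a * s)))) by ring.
  rewrite E.
  assert (X1 : (1 - a) * (w * (1 + (0 - a * s))) <= (1 - a) * 1)
    by (apply Rmult_le_compat_l; lra).
  assert (X2 : a * (w * (1 + (s - a * s))) <= a * u)
    by (apply Rmult_le_compat_l; lra).
  lra.
Qed.

Lemma Rpower_mono a x y : 0 <= a -> 0 < x -> x <= y -> Rpower x a <= Rpower y a.
Proof. intros; apply Rle_Rpower_l; auto. Qed.

Lemma mid a x y : 0 <= a <= 1 -> 0 < x -> 0 < y ->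
  Rpower x a + Rpower y a <= 2 * Rpower ((x + y) / 2) a.
Proof.
  intros Ha Hx Hy. set (t := (x + y) / 2).
  assert (Ht : 0 < t) by (unfold t; lra).
  assert (Ex : x = t * (x / t)) by (field; lra).
  assert (Ey : y = t * (y / t)) by (field; lra).
  rewrite Ex at 1. rewrite Ey at 1.
  rewrite <- !Rpower_mult_distr; try (apply Rdiv_lt_0_compat; lra); auto.
  pose proof (bern a (x / t) Ha ltac:(apply Rdiv_lt_0_compat; lra)) as B1.
  pose proof (bern a (y / t) Ha ltac:(apply Rdiv_lt_0_compat; lra)) as B2.
  pose proof (Rpower_pos t a) as P.
  assert (S : x / t + y / t = 2) by (unfold t; field; lra).
  assert (Rpower t a * Rpower (x / t) a + Rpower t a * Rpower (y / t) a
          <= Rpower t a * (1 + a * (x / t - 1)) + Rpower t a * (1 + a * (y / t - 1))).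
  { apply Rplus_le_compat; apply Rmult_le_compat_l; lra. }
  assert (Rpower t a * (1 + a * (x / t - 1)) + Rpower t a * (1 + a * (y / t - 1))
          = Rpower t a * (2 + a * (x / t + y / t - 2))) by ring.
  rewrite S in H0. lra.
Qed.

Lemma tpow t a : 0 < t <= 1 -> 0 <= a <= 1 -> t <= Rpower t a.
Proof.
  intros Ht Ha. unfold Rpower.
  assert (L : ln t <= 0).
  { destruct (Rle_lt_or_eq_dec _ _ (proj2 Ht)) as [H|H].
    - rewrite <- ln_1; left; apply ln_increasing; lra.
    - subst; rewrite ln_1; lra. }
  rewrite <- (exp_ln t) at 1 by lra. apply exp_le'. nra.
Qed.

Lemma sub0 a x y : 0 <= a <= 1 -> 0 < x -> 0 < y ->
  Rpower (x + y) a <= Rpower x a + Rpower y a.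
Proof.
  intros Ha Hx Hy.
  assert (K : forall z, 0 < z <= x + y -> Rpower (x + y) a * (z / (x + y)) <= Rpower z a).
  { intros z Hz.
    assert (Ez : z = (x + y) * (z / (x + y))) by (field; lra).
    rewrite Ez at 2. rewrite <- Rpower_mult_distr; try lra.
    2:{ apply Rdiv_lt_0_compat; lra. }
    apply Rmult_le_compat_l; [left; apply Rpower_pos|].
    apply tpow; auto. split; [apply Rdiv_lt_0_compat; lra|].
    apply (Rmult_le_reg_r (x + y)); [lra|]. unfold Rdiv; rewrite Rmult_assoc, Rinv_l; lra. }
  pose proof (K x ltac:(lra)). pose proof (K y ltac:(lra)).
  assert (Rpower (x + y) a * (x / (x + y)) + Rpower (x + y) a * (y / (x + y))
          = Rpower (x + y) a) by (field; lra).
  lra.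
Qed.

Lemma sub' a x y : 0 <= a <= 1 -> 0 < x -> 0 <= y ->
  Rpower (x + y) a <= Rpower x a + Rpower y a.
Proof.
  intros Ha Hx Hy. destruct (Rle_lt_or_eq_dec _ _ Hy) as [H|H].
  - apply sub0; auto.
  - subst. rewrite Rplus_0_r. pose proof (Rpower_pos 0 a). lra.
Qed.

Lemma nat_above r : exists n : nat, r < INR n.
Proof.
  destruct (archimed (Rabs r)) as [H _].
  assert (0 < IZR (up (Rabs r))) by (pose proof (Rabs_pos r); lra).
  apply lt_0_IZR in H0.
  exists (Z.to_nat (up (Rabs r))). rewrite INR_IZR_INZ, Z2Nat.id by lia.
  pose proof (Rle_abs r). lra.
Qed.

Lemma bound_below (Delta : nat -> nat) N : exists K : nat, forall k, (k < N)%nat -> (Delta k <= K)%nat.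
Proof.
  induction N as [|N [K HK]].
  - exists 0%nat; intros; lia.
  - exists (Nat.max K (Delta N)); intros k Hk.
    destruct (Nat.eq_dec k N); [subst; lia|]. specialize (HK k ltac:(lia)). lia.
Qed.

Theorem lemma4p3 (Delta : nat -> nat) (eta C : R) :
  0 < eta < 1 ->
  (forall n : nat, exists l m : nat,
      INR (l + m) <= eta * INR n + C /\ (Delta n <= Delta l + Delta m)%nat) ->
  preceq (fun n => INR (Delta n))
         (fun x => Rpower x (ln 2 / ln (2 / eta))).
Proof.
  intros Heta HD.
  set (a := ln 2 / ln (2 / eta)).
  assert (Hl2 : 0 < ln 2) by (rewrite <- ln_1; apply ln_increasing; lra).
  assert (H2e : 2 < 2 / eta).
  { apply (Rmult_lt_reg_r eta); [lra|]. unfold Rdiv; rewrite Rmult_assoc, Rinv_l; lra. }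
  assert (Hl2e : ln 2 < ln (2 / eta)) by (apply ln_increasing; lra).
  assert (Ha : 0 < a < 1).
  { unfold a; split; [apply Rdiv_lt_0_compat; lra|].
    apply (Rmult_lt_reg_r (ln (2 / eta))); [lra|].
    unfold Rdiv; rewrite Rmult_assoc, Rinv_l; lra. }
  assert (Ha' : 0 <= a <= 1) by lra.
  assert (Hpow2 : Rpower (2 / eta) a = 2).
  { unfold Rpower, a. replace (ln 2 / ln (2 / eta) * ln (2 / eta)) with (ln 2) by (field; lra).
    apply exp_ln; lra. }
  assert (Hetaa : Rpower eta a < 1).
  { unfold Rpower. rewrite <- exp_0. apply exp_increasing.
    assert (ln eta < 0) by (rewrite <- ln_1; apply ln_increasing; lra). nra. }
  assert (HC : 0 <= C).
  { destruct (HD 0%nat) as (l & m & H1 & _). pose proof (pos_INR (l + m)).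
    simpl in H1. lra. }
  set (c := C / eta).
  assert (Hc : 0 <= c) by (unfold c; apply Rmult_le_pos; [lra|left; apply Rinv_0_lt_compat; lra]).
  set (T := Rmax ((Rpower C a + 1) / (1 - Rpower eta a)) (Rpower c a + 1)).
  assert (HT : 0 < T).
  { pose proof (Rpower_pos c a). unfold T. eapply Rlt_le_trans; [|apply Rmax_r]. lra. }
  destruct (nat_above (Rmax (Rmax (C / (1 - eta)) 1) (Rpower T (1 / a)))) as [N0 HN0].
  assert (HN0a : C / (1 - eta) < INR N0).
  { eapply Rle_lt_trans; [|apply HN0]. eapply Rle_trans; [apply Rmax_l|apply Rmax_l]. }
  assert (HN0b : 1 < INR N0).
  { eapply Rle_lt_trans; [|apply HN0]. eapply Rle_trans; [apply Rmax_r|apply Rmax_l]. }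
  assert (HN0c : T <= Rpower (INR N0) a).
  { assert (Rpower T (1 / a) < INR N0) by (eapply Rle_lt_trans; [apply Rmax_r|apply HN0]).
    replace T with (Rpower (Rpower T (1 / a)) a).
    - apply Rpower_mono; [lra|apply Rpower_pos|lra].
    - rewrite Rpower_mult. replace (1 / a * a) with 1 by (field; lra). apply Rpower_1; auto. }
  destruct (bound_below Delta N0) as [K HK].
  set (A := 2 * INR K + 1).
  assert (HA : 1 <= A) by (unfold A; pose proof (pos_INR K); lra).
  set (D := A * Rpower c a).
  assert (HT1 : forall n, (N0 <= n)%nat ->
            Rpower C a + 1 <= (1 - Rpower eta a) * Rpower (INR n) a
            /\ Rpower c a + 1 <= Rpower (INR n) a).
  { intros n Hn. assert (Hn' : INR N0 <= INR n) by (apply le_INR; auto).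
    assert (T <= Rpower (INR n) a) by (eapply Rle_trans; [apply HN0c|apply Rpower_mono; lra]).
    split.
    - assert ((Rpower C a + 1) / (1 - Rpower eta a) <= Rpower (INR n) a)
        by (eapply Rle_trans; [apply Rmax_l|eauto]).
      apply (Rmult_le_compat_l (1 - Rpower eta a)) in H0; [|lra].
      replace ((1 - Rpower eta a) * ((Rpower C a + 1) / (1 - Rpower eta a))) with (Rpower C a + 1) in H0
        by (field; lra). lra.
    - eapply Rle_trans; [apply Rmax_r|eauto]. }
  assert (Main : forall n k, (k <= n)%nat -> (N0 <= k)%nat ->
            INR (Delta k) <= A * Rpower (INR k) a - D).
  { induction n as [|n IH]; intros k Hk HN.
    - exfalso. assert (INR N0 <= INR k) by (apply le_INR; auto).
      assert (k = 0%nat) by lia. subst. simpl in *. lra.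
    - assert (IHk : forall j, (j < k)%nat -> (N0 <= j)%nat -> INR (Delta j) <= A * Rpower (INR j) a - D)
        by (intros; apply IH; lia).
      clear IH.
      assert (Hk1 : INR N0 <= INR k) by (apply le_INR; auto).
      destruct (HD k) as (l & m & Hlm & Hd).
      assert (Hsm : eta * INR k + C < INR k).
      { apply (Rmult_lt_compat_l (1 - eta)) in HN0a; [|lra].
        replace ((1 - eta) * (C / (1 - eta))) with C in HN0a by (field; lra). nra. }
      assert (Hlt : (l + m < k)%nat) by (apply INR_lt; lra).
      rewrite plus_INR in Hlm.
      apply le_INR in Hd. rewrite plus_INR in Hd.
      destruct (HT1 k HN) as [T1 T2].
      assert (Hkpos : 0 < INR k) by lra.
      pose proof (Rpower_pos c a) as Pc.
      assert (Hsub1 : Rpower (eta * INR k + C) a <= Rpower eta a * Rpower (INR k) a + Rpower C a).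
      { rewrite Rpower_mult_distr by lra. apply sub'; auto. nra. }
      destruct (le_lt_dec N0 l) as [Hl|Hl]; destruct (le_lt_dec N0 m) as [Hm|Hm].
      + pose proof (IHk l ltac:(lia) Hl) as Il. pose proof (IHk m ltac:(lia) Hm) as Im.
        assert (HlN : INR N0 <= INR l) by (apply le_INR; auto).
        assert (HmN : INR N0 <= INR m) by (apply le_INR; auto).
        pose proof (mid a (INR l) (INR m) Ha' ltac:(lra) ltac:(lra)) as M1.
        assert (M2 : Rpower ((INR l + INR m) / 2) a <= Rpower ((eta * INR k + C) / 2) a)
          by (apply Rpower_mono; lra).
        assert (M3 : 2 * Rpower ((eta * INR k + C) / 2) a = Rpower (INR k + c) a).
        { transitivity (Rpower (2 / eta) a * Rpower ((eta * INR k + C) / 2) a); [rewrite Hpow2; ring|].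
          rewrite Rpower_mult_distr by nra. f_equal. unfold c. field. lra. }
        pose proof (sub' a (INR k) c Ha' Hkpos Hc) as M4.
        assert (A * (Rpower (INR l) a + Rpower (INR m) a) <= A * (Rpower (INR k) a + Rpower c a))
          by (apply Rmult_le_compat_l; lra).
        unfold D in *. lra.
      + pose proof (IHk l ltac:(lia) Hl) as Il.
        assert (HmK : INR (Delta m) <= INR K) by (apply le_INR; apply HK; auto).
        assert (HlN : INR N0 <= INR l) by (apply le_INR; auto).
        assert (Rpower (INR l) a <= Rpower (eta * INR k + C) a)
          by (apply Rpower_mono; [lra|lra|pose proof (pos_INR m); lra]).
        assert (A * (Rpower (INR l) a) <= A * (Rpower eta a * Rpower (INR k) a + Rpower C a))
          by (apply Rmult_le_compat_l; lra).
        assert (A * 1 <= A * ((1 - Rpower eta a) * Rpower (INR k) a - Rpower C a))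
          by (apply Rmult_le_compat_l; lra).
        unfold A in *. unfold D in *. lra.
      + pose proof (IHk m ltac:(lia) Hm) as Im.
        assert (HlK : INR (Delta l) <= INR K) by (apply le_INR; apply HK; auto).
        assert (HmN : INR N0 <= INR m) by (apply le_INR; auto).
        assert (Rpower (INR m) a <= Rpower (eta * INR k + C) a)
          by (apply Rpower_mono; [lra|lra|pose proof (pos_INR l); lra]).
        assert (A * (Rpower (INR m) a) <= A * (Rpower eta a * Rpower (INR k) a + Rpower C a))
          by (apply Rmult_le_compat_l; lra).
        assert (A * 1 <= A * ((1 - Rpower eta a) * Rpower (INR k) a - Rpower C a))
          by (apply Rmult_le_compat_l; lra).
        unfold A in *. unfold D in *. lra.
      + assert (HlK : INR (Delta l) <= INR K) by (apply le_INR; apply HK; auto).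
        assert (HmK : INR (Delta m) <= INR K) by (apply le_INR; apply HK; auto).
        assert (A * 1 <= A * (Rpower (INR k) a - Rpower c a))
          by (apply Rmult_le_compat_l; lra).
        unfold A in *. unfold D in *. lra. }
  exists (Rpower A (1 / a)). split; [apply Rpower_pos|].
  exists N0. intros n Hn. fold a.
  pose proof (Main n n (le_n n) Hn) as Mn.
  assert (Hnpos : 0 < INR n) by (pose proof (le_INR _ _ Hn); lra).
  rewrite <- Rpower_mult_distr by (auto; apply Rpower_pos).
  rewrite Rpower_mult. replace (1 / a * a) with 1 by (field; lra). rewrite Rpower_1 by lra.
  pose proof (Rpower_pos c a). unfold D in Mn.
  assert (0 <= A * Rpower c a) by (apply Rmult_le_pos; lra). lra.
Qed.
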